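(* Let $N\ge 2$ and let $p$ be a polynomial with complex coefficients of degree at most $N-1$. Let $w_1,\ldots,w_{2N-1}\in\mathbb{T}$ be mutually distinct points and let $z_1,\ldots,z_{2N-3}\in\mathbb{T}$ be mutually distinct points. Then the $4N-4$ values $$|p(w_j)|,\ j=1,\ldots,2N-1,\qquad\text{and}\qquad |p'(z_k)|,\ k=1,\ldots,2N-3,$$ determine $p$ uniquely up to a global phase factor. That is, if $q$ is another complex polynomial of degree at most $N-1$ with $|q(w_j)|=|p(w_j)|$ for all $j$ and $|q'(z_k)|=|p'(z_k)|$ for all $k$, then $q=e^{i\varphi}p$ for some $\varphi\in\mathbb{R}$.
   Context: $\mathbb{T}=\{z\in\mathbb{C}:|z|=1\}$ denotes the unit circle and $p'$ the derivative of $p$. *)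

(* Defs.v *)
(* complex numbers modelled by an arbitrary numClosedFieldType. *)
From HB Require Import structures.
From mathcomp Require Import all_boot all_order all_algebra.
Set Implicit Arguments. Unset Strict Implicit. Unset Printing Implicit Defensive.

(* Main.v *)
Require Import Defs.
From HB Require Import structures.
From mathcomp Require Import all_boot all_order all_algebra.
From mathcomp Require Import zify ring lra.
Import Order.TTheory GRing.Theory Num.Theory.
Local Open Scope ring_scope.


Definition revc {C : numClosedFieldType} (m : nat) (p : {poly C}) : {poly C} := \poly_(i < m) (p`_(m.-1 - i))^*.

Lemma revc_horner {C : numClosedFieldType} m (p : {poly C}) x : (size p <= m)%N -> x * x^* = 1 ->
  (revc m p).[x] = x^+(m.-1) * (p.[x])^*.
Proof.
move=> hp hx.
rewrite (horner_coef_wide _ (size_poly _ _)) (horner_coef_wide _ hp).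
rewrite rmorph_sum mulr_sumr (reindex_inj rev_ord_inj) /=.
apply: eq_bigr => j _; rewrite coef_poly /=.
have hj := ltn_ord j.
have -> : (m - j.+1 < m)%N by lia.
have -> : (m.-1 - (m - j.+1) = j)%N by lia.
rewrite rmorphM rmorphXn /=.
have -> : (m.-1 = (m - j.+1) + j)%N by lia.
rewrite exprD -mulrA (mulrCA (x ^+ j)) -exprMn hx expr1n mulr1 mulrC //.
Qed.

Lemma revc_eq0 {C : numClosedFieldType} m (p : {poly C}) : (size p <= m)%N -> (revc m p == 0) = (p == 0).
Proof.
move=> hp; apply/idP/idP => /eqP; last first.
  move=> ->; apply/eqP/polyP => i; rewrite coef_poly !coef0 rmorph0 if_same //.
move=> h; apply/eqP.

apply/polyP => j; rewrite coef0.
case: (ltnP j m) => hj; last by rewrite nth_default // (leq_trans hp hj).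
have := congr1 (fun r : {poly C} => r`_(m.-1 - j)) h.
rewrite coef_poly coef0.
have -> : (m.-1 - j < m)%N by lia.
have -> : (m.-1 - (m.-1 - j) = j)%N by lia.
by move/eqP; rewrite conjC_eq0 => /eqP.
Qed.

Lemma revcZ {C : numClosedFieldType} m c (p : {poly C}) : revc m (c *: p) = c^* *: revc m p.
Proof.
apply/polyP => i; rewrite coefZ !coef_poly; case: ifP => _; last by rewrite mulr0.
by rewrite coefZ rmorphM.
Qed.


Lemma coef_revc {C : numClosedFieldType} m (p : {poly C}) i :
  (revc m p)`_i = if (i < m)%N then (p`_(m.-1 - i))^* else 0.
Proof. exact: coef_poly. Qed.

Lemma size_revc {C : numClosedFieldType} m (p : {poly C}) : (size (revc m p) <= m)%N.
Proof. exact: size_poly. Qed.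

Lemma L1 {C : numClosedFieldType} m (p q : {poly C}) (rs : seq C) : (size p <= m)%N -> (size q <= m)%N ->
  uniq rs -> (2 * m - 1 <= size rs)%N ->
  (forall x, x \in rs -> x * x^* = 1 /\ `|q.[x]| = `|p.[x]|) ->
  p * revc m p = q * revc m q.
Proof.
move=> hp hq hu hs hx; apply/eqP; rewrite -subr_eq0; apply/negPn/negP => hne.
have hr : all (root (p * revc m p - q * revc m q)) rs.
  apply/allP => x /hx [h1 h2]; apply/rootP.
  rewrite !hornerE !revc_horner // !mulrA -!(mulrC (x ^+ _)) -!mulrA -!normCK h2.
  by rewrite subrr.
have H := max_poly_roots hne hr hu.
have hsz : (size (p * revc m p - q * revc m q)%R <= 2 * m - 1)%N.
  apply: (leq_trans (size_polyD _ _)); rewrite size_polyN geq_max.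
  have hr1 := size_revc m p; have hr2 := size_revc m q.
  apply/andP; split; apply: (leq_trans (size_polyMleq _ _)). all: try lia.
move: hq hr2; set a := size q; set b := size (revc m q); clear; lia.
by rewrite ltnNge (leq_trans hsz hs) in H.
Qed.


Lemma revc_deriv {C : numClosedFieldType} n (p : {poly C}) :
  revc n p^`() = n%:R *: revc n.+1 p - 'X * (revc n.+1 p)^`().
Proof.
apply/polyP => i; rewrite coefB coefZ coefXM !coef_deriv !coef_revc coef_deriv /=.
case: (ltnP i n) => hi.
  have -> : (i < n.+1)%N by lia.
  have -> : (n.-1 - i).+1 = (n - i)%N by lia.
  case: i hi => [|i] hi /=.
      by rewrite subn0 rmorphMn /= mulr_natl subr0.
  have -> : (i.+1 < n.+1)%N by lia.
  by rewrite rmorphMn /= mulr_natl mulrnBr //; lia.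
case: i hi => [|i] hi /=.
  have -> : n = 0%N by lia.
  by rewrite mul0r subr0.
case: (ltnP i n) => hi2.
  have -> : i.+1 = n by lia.
  by rewrite mulr_natl subrr.
have -> : (i.+1 < n.+1)%N = false by apply/negbTE; rewrite -leqNgt.
by rewrite mulr0 mul0rn subr0.
Qed.


Lemma coef_size_gt {C : numClosedFieldType} {r : {poly C}} {i} : r`_i != 0 -> (i < size r)%N.
Proof. by move=> h; rewrite ltnNge; apply/negP => h2; move: h; rewrite nth_default ?eqxx. Qed.

Lemma deriv_size {C : numClosedFieldType} {r : {poly C}} : (1 < size r)%N ->
  size r^`() = (size r).-1 /\ lead_coef r^`() = lead_coef r *+ (size r).-1.
Proof.
move=> h.
have hr : r != 0 by rewrite -size_poly_gt0; lia.
have hc : r^`()`_(size r).-2 = lead_coef r *+ (size r).-1.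
  by rewrite coef_deriv lead_coefE; congr (_ `_ _ *+ _); lia.
have hne : r^`()`_(size r).-2 != 0.
  rewrite hc mulrn_eq0 negb_or lead_coef_eq0 hr andbT; lia.
have h1 := lt_size_deriv hr; have h2 := coef_size_gt hne.
have hs : size r^`() = (size r).-1 by lia.
by split => //; rewrite lead_coefE hs -hc; congr (_ `_ _); lia.
Qed.

Lemma size_small {C : numClosedFieldType} (r s : {poly C}) : r != 0 -> s != 0 -> (size r <= 1)%N ->
  r^`() * s = s^`() * r -> size r = size s.
Proof.
move=> hr hs h1 e.
have e0 : r^`() = 0 by rewrite (size1_polyC h1) derivC.
move: e; rewrite e0 mul0r => /esym/eqP; rewrite mulf_eq0 (negbTE hr) orbF => /eqP hs0.
have := size_poly_gt0 r; have := size_poly_gt0 s; rewrite hr hs.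
case: (ltnP 1 (size s)) => h2; last by lia.
have [h3 _] := deriv_size h2.
by move: h3; rewrite hs0 size_poly0; lia.
Qed.

Lemma sizeW {C : numClosedFieldType} (r s : {poly C}) : r != 0 -> s != 0 ->
  r^`() * s = s^`() * r -> size r = size s.
Proof.
move=> hr hs e.
case: (leqP (size r) 1) => h1; first exact: size_small.
case: (leqP (size s) 1) => h2; first by apply/esym/size_small.
have [a1 a2] := deriv_size h1; have [b1 b2] := deriv_size h2.
have ra : r^`() != 0 by rewrite -size_poly_gt0 a1; lia.
have sa : s^`() != 0 by rewrite -size_poly_gt0 b1; lia.
have := congr1 lead_coef e; rewrite !lead_coefM a2 b2.
rewrite -[lead_coef r *+ _]mulr_natr -[lead_coef s *+ _]mulr_natr -!mulrA (mulrC (lead_coef s)) -!mulrA.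
have lr : lead_coef r != 0 by rewrite lead_coef_eq0.
have ls : lead_coef s != 0 by rewrite lead_coef_eq0.
move=> e1.
have e2 : (size r).-1%:R * lead_coef s = (size s).-1%:R * lead_coef s :> C.
  by apply: (mulfI lr); rewrite e1 mulrCA.
have : ((size r).-1%:R : C) = (size s).-1%:R by apply: (mulIf ls).
by move/eqP; rewrite eqr_nat; lia.
Qed.


Lemma W {C : numClosedFieldType} (u s : {poly C}) : s != 0 -> u^`() * s = s^`() * u -> exists c, u = c *: s.
Proof.
move=> hs e.
have [->|hu] := eqVneq u 0; first by exists 0; rewrite scale0r.
have hsz := sizeW u s hu hs e.
set c := lead_coef u / lead_coef s.
exists c; apply/eqP; rewrite -subr_eq0; apply/negPn/negP => hr.
have er : (u - c *: s)^`() * s = s^`() * (u - c *: s).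
  by rewrite derivB derivZ mulrBl mulrBr e -!scalerAl -scalerAr mulrC.
have hsz2 := sizeW _ s hr hs er.
have : (u - c *: s)`_(size s).-1 = 0.
  rewrite coefB coefZ -lead_coefE -hsz -lead_coefE /c.
  by rewrite mulfVK ?subrr // lead_coef_eq0.
by move=> h; move: hr; rewrite -lead_coef_eq0 lead_coefE hsz2 h eqxx.
Qed.


Lemma size_derivle {C : numClosedFieldType} (p : {poly C}) n : (size p <= n.+1)%N -> (size p^`() <= n)%N.
Proof. move=> h; apply: leq_trans (size_poly _ _) _; by rewrite -subn1 leq_subLR. Qed.

Lemma unit_conj {C : numClosedFieldType} x : `|x| = 1 -> x * x^* = 1 :> C.
Proof. by move=> h; rewrite -normCK h expr1n. Qed.

Lemma core {C : numClosedFieldType} n (p q : {poly C}) : (0 < n)%N -> (size p <= n.+1)%N -> (size q <= n.+1)%N ->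
  p * revc n.+1 p = q * revc n.+1 q ->
  p^`() * revc n p^`() = q^`() * revc n q^`() ->
  exists c : C, `|c| = 1 /\ q = c *: p.
Proof.
case: n => [//|n] _ hp hq E1 E2.
set s := revc n.+2 p in E1 E2 *; set t := revc n.+2 q in E1 E2 *.
have [p0|pn0] := eqVneq p 0.
  exists 1; split; first by rewrite normr1.
  move: E1; rewrite p0 mul0r scale1r => /esym/eqP; rewrite mulf_eq0.
  by rewrite /t revc_eq0 // orbb => /eqP.
have sn0 : s != 0 by rewrite /s revc_eq0.
have psn0 : p * s != 0 by rewrite mulf_neq0.
have qn0 : q != 0 by apply: contra psn0; rewrite E1 => /eqP ->; rewrite mul0r.
have tn0 : t != 0 by rewrite /t revc_eq0.
set nn := (n.+1%:R : C)%:P.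
have E2' : p^`() * (nn * s - 'X * s^`()) = q^`() * (nn * t - 'X * t^`()).
  by move: E2; rewrite !revc_deriv -!mul_polyC.
set Xp := 'X * p^`() * s; set Yp := p * ('X * s^`() - nn * s).
set Xq := 'X * q^`() * t; set Yq := q * ('X * t^`() - nn * t).
have Hsum : Xp + Yp = Xq + Yq.
  have -> : Xp + Yp = 'X * (p * s)^`() - nn * (p * s) by rewrite derivM /Xp /Yp; ring.
  have -> : Xq + Yq = 'X * (q * t)^`() - nn * (q * t) by rewrite derivM /Xq /Yq; ring.
  by rewrite E1.
have Hprod : Xp * Yp = Xq * Yq.
  have -> : Xp * Yp = - 'X * (p * s) * (p^`() * (nn * s - 'X * s^`())) by rewrite /Xp /Yp; ring.
  have -> : Xq * Yq = - 'X * (q * t) * (q^`() * (nn * t - 'X * t^`())) by rewrite /Xq /Yq; ring.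
  by rewrite E1 E2'.
have H0 : (Xq - Xp) * (Xq - Yp) = 0.
  have -> : (Xq - Xp) * (Xq - Yp) = Xq * Xq - Xq * (Xp + Yp) + Xp * Yp by ring.
  rewrite Hsum Hprod; ring.
have Xn0 : ('X : {poly C}) != 0 by rewrite polyX_eq0.
have Hqp : q^`() * p = p^`() * q.
  move/eqP: H0; rewrite mulf_eq0 !subr_eq0 => /orP [] /eqP.
    rewrite /Xq /Xp -!mulrA => /(mulfI Xn0) e.
    apply: (mulIf tn0).
    have -> : q^`() * p * t = (q^`() * t) * p by ring.
    rewrite e; have -> : p^`() * s * p = p^`() * (p * s) by ring.
    rewrite E1; ring.
  rewrite /Xq /Yp => e.
  have e2 : 'X * q^`() * s = q * ('X * s^`() - nn * s).
    apply: (mulIf tn0).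
    have -> : 'X * q^`() * s * t = ('X * q^`() * t) * s by ring.
    rewrite e; have -> : q * ('X * s^`() - nn * s) * t = (q * t) * ('X * s^`() - nn * s) by ring.
    rewrite -E1; ring.
  set u := 'X^(n.+1) * q.
  have eu : u^`() * s = s^`() * u.
    apply: (mulfI Xn0).
    rewrite /u derivM derivXn /= exprS -mulr_natl.
    have -> : 'X * ((n.+1%:R * 'X^n * q + 'X * 'X^n * q^`()) * s) =
      'X * 'X^n * (nn * q * s + 'X * q^`() * s).
      rewrite /nn polyC_natr; ring.
    rewrite e2; ring.
  have [c hc] := W u s sn0 eu.
  have cn0 : c != 0.
    apply/eqP => c0; move: hc; rewrite c0 scale0r => /eqP.
    by rewrite /u mulf_eq0 (negbTE qn0) orbF -size_poly_eq0 size_polyXn.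
  have hq0 : q^`() = 0.
    have : (size u <= n.+2)%N by rewrite hc size_scale // size_revc.
    rewrite /u size_mul ?size_polyXn //; last by rewrite -size_poly_eq0 size_polyXn.
    move=> h; have h1 : (size q <= 1)%N by move: h; move: (size q) => k; lia.
    by rewrite (size1_polyC h1) derivC.
  have hp0 : p^`() = 0.
    apply/polyP => i; rewrite coef_deriv coef0.
    case: (leqP (i.+1) n.+1) => hi; last first.
      by rewrite nth_default ?mul0rn //; move: hp; move: (size p) => k; lia.
    have := congr1 (fun r : {poly C} => r`_(n.+1 - i.+1)) hc.
    rewrite /u coefXnM coefZ /s coef_revc.
    have -> : (n.+1 - i.+1 < n.+1)%N by lia.
    have -> : (n.+1 - i.+1 < n.+2)%N by lia.
    have -> : (n.+2.-1 - (n.+1 - i.+1) = i.+1)%N by lia.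
    move/esym/eqP; rewrite mulf_eq0 (negbTE cn0) /= conjC_eq0 => /eqP ->.
    by rewrite mul0rn.
  by rewrite hq0 hp0 !mul0r.
have [c hc] := W q p pn0 Hqp.
exists c; split => //.
move: E1; rewrite /t hc revcZ -/s -scalerAl -scalerAr scalerA => /eqP.
rewrite -subr_eq0 -{1}(scale1r (p * s)) -scalerBl scaler_eq0 (negbTE psn0) orbF.
rewrite subr_eq0 => /eqP e.
have : `|c| ^+ 2 == 1 by rewrite normCK -e.
by rewrite sqrp_eq1 ?normr_ge0 // => /eqP.
Qed.


Theorem theorem1p1 (C : numClosedFieldType) (N : nat) (hN : (2 <= N)%N)
  (p q : {poly C}) (hp : (size p <= N)%N) (hq : (size q <= N)%N)
  (w : 'I_(2 * N - 1)%N -> C) (z : 'I_(2 * N - 3)%N -> C)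
  (hw : injective w) (hz : injective z)
  (hwT : forall j, `|w j| = 1) (hzT : forall k, `|z k| = 1)
  (hqw : forall j, `|q.[w j]| = `|p.[w j]|)
  (hqz : forall k, `|(q^`()).[z k]| = `|(p^`()).[z k]|) :
  exists c : C, `|c| = 1 /\ q = c *: p.
Proof.
case: N hN hp hq w z hw hz hwT hzT hqw hqz => [|[|n]] // _ hp hq w z hw hz hwT hzT hqw hqz.
apply: (@core C n.+1) => //.
  apply: (L1 _ _ _ (map w (enum 'I_(2 * n.+2 - 1)))) => //.
  - by rewrite map_inj_uniq ?enum_uniq.
  - by rewrite size_map size_enum_ord.
  - by move=> x /mapP [j _ ->]; split; [exact: unit_conj | exact: hqw].
apply: (L1 _ _ _ (map z (enum 'I_(2 * n.+2 - 3)))).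
- exact: size_derivle.
- exact: size_derivle.
- by rewrite map_inj_uniq ?enum_uniq.
- by rewrite size_map size_enum_ord; lia.
- by move=> x /mapP [j _ ->]; split; [exact: unit_conj | exact: hqz].
Qed.
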